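(* If $n$ is a non-negative integer, then $$\sum_{k = 1}^n \sum_{j = 0}^{k - 1} \frac{2^{2j}}{k - j} \binom{2(n - j)}{n - j} = 2^{2n + 1} + \left(H_n - 2\right)(2n + 1)\binom{2n}{n}$$ and $$\sum_{k = 1}^n \sum_{j = 0}^{k - 1} \frac{2^{2j}}{2k - 2j - 1} \binom{2(n - j)}{n - j} = \left(O_{n + 1} - 1 \right)(2n + 1)\binom{2n}{n}.$$
   Context: $H_n=\sum_{m=1}^n\frac1m$ and $O_n=\sum_{m=1}^n\frac1{2m-1}$. Empty sums are zero. *)

(* Defs.v *)
From mathcomp Require Import all_boot all_order all_algebra.
Set Implicit Arguments. Unset Strict Implicit. Unset Printing Implicit Defensive.
Import GRing.Theory Num.Theory.
Local Open Scope ring_scope.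

Definition harm (n : nat) : rat := \sum_(1 <= m < n.+1) (m%:R)^-1.
Definition oharm (n : nat) : rat := \sum_(1 <= m < n.+1) ((2 * m - 1)%N%:R)^-1.

(* Main.v *)
Require Import Defs.
From mathcomp Require Import all_boot all_order all_algebra.
From mathcomp Require Import ring lra zify.
Import GRing.Theory Num.Theory.
Local Open Scope ring_scope.

Lemma swap_sum (F : nat -> nat -> rat) n :
  \sum_(1 <= k < n.+1) \sum_(0 <= j < k) F j k =
  \sum_(0 <= j < n) \sum_(j.+1 <= k < n.+1) F j k.
Proof.
elim: n => [|n IH]; first by rewrite !big_geq.
rewrite big_nat_recr //= IH.
rewrite [RHS](eq_big_nat _ _ (F2 := fun j =>
   \sum_(j.+1 <= k < n.+1) F j k + F j n.+1)); last first.
  by move=> j /andP[_ hj]; rewrite big_nat_recr.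
rewrite big_split /= [X in _ = X + _]big_nat_recr //= [X in _ = _ + X + _]big_geq // addr0.
by [].
Qed.

Lemma inner (g : nat -> rat) n j : (j <= n)%N ->
  \sum_(j.+1 <= k < n.+1) g (k - j)%N = \sum_(1 <= i < (n - j).+1) g i.
Proof.
move=> hj; rewrite -{1}(add1n j) big_addn subSn //.
by apply: eq_bigr => i _; rewrite addnK.
Qed.

Definition cc (m : nat) : rat := ('C(2 * m, m))%:R.

Lemma cc_rec n : (n.+1)%:R * cc n.+1 = 2%:R * (2 * n + 1)%N%:R * cc n.
Proof.
rewrite /cc -!natrM; congr (_%:R).
have h1 := mul_bin_down (2 * n.+1) n.+1.
have h2 := mul_bin_diag (2 * n + 1) n.
have e1 : (2 * n.+1).-1 = (2 * n + 1)%N by lia.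
have e2 : (2 * n + 1).-1 = (2 * n)%N by lia.
have e3 : (2 * n.+1 - n.+1 = n.+1)%N by lia.
rewrite e1 e3 in h1; rewrite e2 in h2.
have e4 : (2 * n.+1 = 2 * (n.+1))%N by [].
by rewrite -h1 -[(2 * (2 * n + 1) * _)%N]mulnA h2 mulnA.
Qed.

Lemma genrec (h : nat -> rat) n :
  \sum_(0 <= j < n.+1) 2%:R ^+ (2 * j) * (h (n.+1 - j)%N * cc (n.+1 - j)%N) =
  h n.+1 * cc n.+1 + 4%:R * \sum_(0 <= j < n) 2%:R ^+ (2 * j) * (h (n - j)%N * cc (n - j)%N).
Proof.
rewrite big_nat_recl // mul1r subn0 mulr_sumr; congr (_ + _).
apply: eq_bigr => j _; rewrite subSS mulnS exprD mulrA.
have -> : (2%:R ^+ 2 : rat) = 4%:R by rewrite expr2 -natrM.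
by rewrite !mulrA.
Qed.

Lemma partA n :
  \sum_(0 <= j < n) 2%:R ^+ (2 * j) * (harm (n - j)%N * cc (n - j)%N) =
  2%:R ^+ (2 * n + 1) + (harm n - 2%:R) * (2 * n + 1)%N%:R * cc n.
Proof.
elim: n => [|n IH].
  by rewrite big_geq // /harm big_geq // /cc /=; ring.
rewrite genrec IH.
have hH : harm n.+1 = harm n + (n.+1)%:R^-1 by rewrite /harm big_nat_recr.
have hc := cc_rec n.
have hn : (n.+1)%:R != 0 :> rat by rewrite pnatr_eq0.
have -> : cc n.+1 = 2%:R * (2 * n + 1)%N%:R * cc n / (n.+1)%:R.
  by rewrite -hc mulrC mulrA mulVf // mul1r.
rewrite hH.
have -> : (2 * n.+1 + 1)%N%:R = (2 * n + 1)%N%:R + 2%:R :> rat by rewrite -natrD; congr _%:R; lia.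
rewrite -addn1 in hn *.
rewrite !natrD ?natrM !exprD ?exprM.
field.
by move: hn; rewrite natrD.
Qed.

Lemma partB n :
  \sum_(0 <= j < n) 2%:R ^+ (2 * j) * (oharm (n - j)%N * cc (n - j)%N) =
  (oharm n.+1 - 1) * (2 * n + 1)%N%:R * cc n.
Proof.
elim: n => [|n IH].
  by rewrite big_geq // /oharm big_nat1 /= invr1; ring.
rewrite genrec IH.
have hH : oharm n.+2 = oharm n.+1 + ((2 * n + 3)%N%:R)^-1.
  by rewrite /oharm [in LHS]big_nat_recr //=; congr (_ + (_%:R)^-1); lia.
have hc := cc_rec n.
have hn : (n.+1)%:R != 0 :> rat by rewrite pnatr_eq0.
have hn3 : (2 * n + 3)%N%:R != 0 :> rat by rewrite pnatr_eq0 addn3.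
have -> : cc n.+1 = 2%:R * (2 * n + 1)%N%:R * cc n / (n.+1)%:R.
  by rewrite -hc mulrC mulrA mulVf // mul1r.
rewrite hH.
have -> : (2 * n.+1 + 1)%N%:R = (2 * n + 3)%N%:R :> rat by congr _%:R; lia.
rewrite -addn1 in hn *.
rewrite !natrD ?natrM in hn hn3 *.
field.
by move: hn hn3; rewrite addr0 => -> ->.
Qed.

Theorem proposition19 (n : nat) :
  \sum_(1 <= k < n.+1) \sum_(0 <= j < k)
      (2%:R ^+ (2 * j) / (k - j)%N%:R * ('C(2 * (n - j), n - j))%:R : rat)
    = 2%:R ^+ (2 * n + 1) + (harm n - 2%:R) * (2 * n + 1)%N%:R * ('C(2 * n, n))%:R
  /\
  \sum_(1 <= k < n.+1) \sum_(0 <= j < k)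
      (2%:R ^+ (2 * j) / (2 * k - 2 * j - 1)%N%:R * ('C(2 * (n - j), n - j))%:R : rat)
    = (oharm n.+1 - 1) * (2 * n + 1)%N%:R * ('C(2 * n, n))%:R.
Proof.
split.
  rewrite swap_sum -[RHS]partA; apply: eq_big_nat => j /andP[_ hj].
  rewrite (@inner (fun i : nat => 2%:R ^+ (2 * j) / i%:R * cc (n - j)) n j (ltnW hj)).
  rewrite /harm mulr_suml mulr_sumr; apply: eq_bigr => i _; rewrite /=; ring.
rewrite swap_sum -[RHS]partB; apply: eq_big_nat => j /andP[_ hj].
transitivity (\sum_(j.+1 <= k < n.+1)
   (fun i => 2%:R ^+ (2 * j) / (2 * i - 1)%N%:R * cc (n - j)) (k - j)%N).
  apply: eq_big_nat => k /andP[hk _] /=; by rewrite [(2 * (k - j))%N]mulnBr.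
rewrite (@inner (fun i : nat => 2%:R ^+ (2 * j) / (2 * i - 1)%N%:R * cc (n - j)) n j (ltnW hj)).
rewrite /oharm mulr_suml mulr_sumr; apply: eq_bigr => i _; rewrite /=; ring.
Qed.
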